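(* Let $\mathcal{A}$ be a finite real linear hyperplane arrangement of rank $r\le3$. Then $P_{\mathcal{A}}(z)$ is real-rooted.
   Context: Flats of $\mathcal{A}$ are intersections of subsets of its hyperplanes, forming a lattice under inclusion with minimum $\bot=\bigcap\mathcal{A}$ and Möbius function $\mu$; the rank of $\mathcal{A}$ is the rank of this lattice (the codimension of $\bot$). $P_{\mathcal{A}}(z)=\sum_{\mathrm{X}}|\mu(\bot,\mathrm{X})|(z-1)^{\operatorname{codim}\mathrm{X}}$. No simpliciality is assumed. *)

(* Defs.v *)
From HB Require Import structures.
From mathcomp Require Import all_boot all_order all_algebra.
From mathcomp Require Import reals.
Set Implicit Arguments. Unset Strict Implicit. Unset Printing Implicit Defensive.
Import Order.TTheory GRing.Theory Num.Theory.
Local Open Scope ring_scope.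

(* A finite real linear hyperplane arrangement in R^n with m hyperplanes is
   given by nonzero normal vectors a i : 'cV[R]_n; the i-th hyperplane is
   H_i = {x : 'rV_n | x *m a i = 0}, represented (as a row space) by
   kermx (a i).  Repetitions of hyperplanes are harmless: everything below
   only depends on the set of hyperplanes. *)

Section Arrangement.
Variables (R : realType) (n m : nat) (a : 'I_m -> 'cV[R]_n).

Definition hyperplane (i : 'I_m) : 'M[R]_n := kermx (a i).

Definition flat (S : {set 'I_m}) : 'M[R]_n :=
  (\bigcap_(i in S) hyperplane i)%MS.

(* Every flat X is flat (fclosure S) where fclosure S is the set of all
   hyperplanes containing X; flats correspond bijectively to the closed
   index sets, which we use to index the (finite) lattice of flats. *)
Definition fclosure (S : {set 'I_m}) : {set 'I_m} :=
  [set i | (flat S <= hyperplane i)%MS].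

Definition fclosed (S : {set 'I_m}) : bool := fclosure S == S.

Definition flat_le (S T : {set 'I_m}) : bool :=
  [&& fclosed S, fclosed T & (flat S <= flat T)%MS].

Definition flat_bot : {set 'I_m} := setT.

Definition codim (S : {set 'I_m}) : nat := (n - \rank (flat S))%N.

Definition arr_rank : nat := codim flat_bot.

End Arrangement.

(* The fuel #|T| exceeds the length of any chain, so it is the true Möbius
   function when le is a partial order. *)
Fixpoint mobius_aux (T : finType) (le : rel T) (k : nat) (x y : T) : int :=
  if k is k'.+1 then
    if y == x then 1
    else if le x y then
      - \sum_(z : T | le x z && le z y && (z != y)) mobius_aux le k' x z
    else 0
  else 0.

Definition mobius (T : finType) (le : rel T) (x y : T) : int :=
  mobius_aux le #|T| x y.

Definition arr_poly (R : realType) (n m : nat) (a : 'I_m -> 'cV[R]_n) : {poly R} :=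
  \sum_(S : {set 'I_m} | fclosed a S)
     (`|mobius (flat_le a) (flat_bot m) S|%N)%:R *: ('X - 1) ^+ codim a S.

Definition real_rooted (R : realType) (p : {poly R}) : Prop :=
  exists (c : R) (rs : seq R), p = c *: \prod_(x <- rs) ('X - x%:P).

(* Main.v *)
Require Import Defs.
From HB Require Import structures.
From mathcomp Require Import all_boot all_order all_algebra.
From mathcomp Require Import reals.
From mathcomp Require Import zify ring lra.
Set Implicit Arguments. Unset Strict Implicit. Unset Printing Implicit Defensive.
Import Order.TTheory GRing.Theory Num.Theory.
Local Open Scope ring_scope.

Section Basic.
Variables (R : realType) (n m : nat) (a : 'I_m -> 'cV[R]_n).
Hypothesis ha : forall i, a i != 0.

Local Notation F := (flat a).
Local Notation H := (hyperplane a).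
Local Notation cl := (Defs.fclosed a).
Local Notation fcl := (Defs.fclosure a).

Lemma flat_anti (S T : {set 'I_m}) : S \subset T -> (F T <= F S)%MS.
Proof.
move=> ST; apply/sub_bigcapmxP => i iS.
by apply: (bigcapmx_inf i); [exact: (subsetP ST) | exact: submx_refl].
Qed.

Lemma flat_bot_le (S : {set 'I_m}) : (F setT <= F S)%MS.
Proof. by apply: flat_anti; apply: subsetT. Qed.

Lemma flat_le_H (S : {set 'I_m}) i : i \in S -> (F S <= H i)%MS.
Proof. by move=> iS; apply: (bigcapmx_inf i) => //; exact: submx_refl. Qed.

Lemma sub_fcl (S : {set 'I_m}) : S \subset fcl S.
Proof. by apply/subsetP => i iS; rewrite inE flat_le_H. Qed.

Lemma flat_fcl (S : {set 'I_m}) : (F (fcl S) == F S)%MS.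
Proof.
apply/andP; split; first exact: flat_anti (sub_fcl S).
by apply/sub_bigcapmxP => i; rewrite inE.
Qed.

Lemma fcl_closed (S : {set 'I_m}) : cl (fcl S).
Proof.
apply/eqP/setP => i; rewrite !inE.
by rewrite (eqmxP (flat_fcl S)).
Qed.

Lemma closed_eq (S T : {set 'I_m}) : cl S -> cl T -> (F S == F T)%MS -> S = T.
Proof.
move=> cS cT /eqmxP e; rewrite -(eqP cS) -(eqP cT); apply/setP => i.
by rewrite !inE e.
Qed.

Lemma closed_rank_eq (S T : {set 'I_m}) : cl S -> cl T -> (F S <= F T)%MS ->
  \rank (F S) = \rank (F T) -> S = T.
Proof.
move=> cS cT le er; apply: closed_eq => //.
by rewrite -(mxrank_leqif_eq le) er.
Qed.

Lemma closed_rank_lt (S T : {set 'I_m}) : cl S -> cl T -> (F S <= F T)%MS -> S != T ->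
  (\rank (F S) < \rank (F T))%N.
Proof.
move=> cS cT le ne; rewrite ltn_neqAle mxrankS // andbT.
by apply: contra ne => /eqP er; apply/eqP; apply: closed_rank_eq.
Qed.

Lemma flat_union (S T : {set 'I_m}) : (F (S :|: T) == F S :&: F T)%MS.
Proof.
apply/andP; split.
  by rewrite sub_capmx !flat_anti // ?subsetUl ?subsetUr.
apply/sub_bigcapmxP => i; rewrite inE => /orP [iS|iT].
  by apply: submx_trans (capmxSl _ _) (flat_le_H iS).
by apply: submx_trans (capmxSr _ _) (flat_le_H iT).
Qed.

Lemma flat1 i : F [set i] = H i.
Proof. by rewrite /flat big_set1. Qed.

Lemma flat0 : F set0 = 1%:M.
Proof. by rewrite /flat big_pred0 // => i; rewrite inE. Qed.

Lemma n_gt0 (i : 'I_m) : (0 < n)%N.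
Proof.
rewrite lt0n; apply: contraNneq (ha i) => n0.
by apply/eqP/matrixP => j k; have := ltn_ord j; rewrite {2}n0.
Qed.

Lemma rankH i : \rank (H i) = (n - 1)%N.
Proof.
rewrite /hyperplane mxrank_ker; congr (_ - _)%N.
apply/eqP; rewrite eqn_leq rank_leq_col lt0n mxrank_eq0 ha.
done.
Qed.


Lemma rank_cap_seq (s : seq 'I_m) :
  (n <= \rank (\big[capmx/1%:M]_(i <- s) H i) + size s)%N.
Proof.
elim: s => [|j s IH]; first by rewrite big_nil mxrank1 addn0.
rewrite big_cons /=.
move: IH; set B := \big[capmx/1%:M]_(i <- s) H i => IH.
have := mxrank_sum_cap (H j) B.
rewrite rankH.
have := rank_leq_col (H j + B)%MS.
have := n_gt0 j.
move: (\rank (H j + B)%MS) (\rank (H j :&: B)%MS) (\rank B) IH => x y z.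
lia.
Qed.

Lemma rank_bot_ge : (n <= \rank (F setT) + m)%N.
Proof.
have := rank_cap_seq (enum [set: 'I_m]).
rewrite big_enum /= -cardE cardsT card_ord.
by [].
Qed.


Local Notation d0 := (\rank (F setT)).
Definition lvl (j : nat) (S : {set 'I_m}) := cl S && (\rank (F S) == d0 + j)%N.

Lemma rank_ge (S : {set 'I_m}) : (d0 <= \rank (F S))%N.
Proof. exact: mxrankS (flat_bot_le S). Qed.

Lemma rank_le (S : {set 'I_m}) : (\rank (F S) <= n)%N.
Proof. exact: rank_leq_col. Qed.

Lemma closedT : cl setT.
Proof. by apply/eqP/setP => i; rewrite !inE flat_le_H ?inE. Qed.

Lemma closed0 : cl set0.
Proof.
apply/eqP/setP => i; rewrite !inE flat0.
apply/negP => /mxrankS; rewrite mxrank1 rankH; have := n_gt0 i; lia.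
Qed.

Lemma lvl0E S : lvl 0 S = (S == setT).
Proof.
apply/idP/eqP => [/andP [cS /eqP e] | ->]; last by rewrite /lvl closedT addn0 eqxx.
by symmetry; apply: closed_rank_eq => //; [exact: closedT | exact: flat_bot_le | rewrite e addn0].
Qed.

Lemma top_eq S : cl S -> \rank (F S) = n -> S = set0.
Proof.
move=> cS e; apply: closed_rank_eq => //; first exact: closed0.
  by rewrite flat0 submx1.
by rewrite flat0 mxrank1.
Qed.

Lemma fcl1_closed i : cl (fcl [set i]).
Proof. exact: fcl_closed. Qed.

Lemma fcl1_rank i : \rank (F (fcl [set i])) = (n - 1)%N.
Proof. by rewrite (eqmx_rank (flat_fcl _)) flat1 rankH. Qed.

Lemma not_closed_le (X : {set 'I_m}) i : cl X -> i \notin X -> ~~ (F X <= H i)%MS.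
Proof. by move=> /eqP cX; rewrite -{1}cX inE. Qed.

Lemma in_closed_le (X : {set 'I_m}) i : cl X -> i \in X -> (F X <= H i)%MS.
Proof. by move=> /eqP cX; rewrite -{1}cX inE. Qed.

Lemma step_down (X : {set 'I_m}) : cl X -> X != setT ->
  exists A, [/\ cl A, (F A <= F X)%MS & \rank (F A) = (\rank (F X)).-1].
Proof.
move=> cX XT.
have [i iX] : exists i, i \notin X.
  case: (pickP [pred i | i \notin X]) => [i /= iX|all]; first by exists i.
  by case/negP: XT; apply/eqP/setP => i; rewrite inE; have := all i => /= /negbFE.
have nle := not_closed_le cX iX.
exists (fcl (X :|: [set i])); split; first exact: fcl_closed.
  rewrite (eqmxP (flat_fcl _)) (eqmxP (flat_union _ _)); exact: capmxSl.
rewrite (eqmx_rank (flat_fcl _)) (eqmx_rank (flat_union _ _)) flat1.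
have := mxrank_sum_cap (F X) (H i); rewrite rankH.
have r1 : \rank (F X + H i)%MS = n.
  have := mxrank_leqif_eq (addsmxSr (F X) (H i)); rewrite rankH => -[le1 eq1].
  have ne : \rank (F X + H i)%MS != (n - 1)%N.
    apply/negP => /eqP e.
    have /eqmxP e2 : (H i == F X + H i)%MS by rewrite -eq1 e.
    by case/negP: nle; rewrite e2 addsmxSl.
  have := rank_leq_col (F X + H i)%MS; have := n_gt0 i.
  move: (\rank (F X + H i)%MS) ne le1 => x; lia.
rewrite r1; have := n_gt0 i; move: (\rank (F X)) (\rank (F X :&: H i)%MS) => x y.
lia.
Qed.

Lemma step_up (A : {set 'I_m}) : cl A -> A != set0 ->
  exists i, (F A <= F (fcl [set i]))%MS.
Proof.
move=> cA /set0Pn [i iA]; exists i.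
by rewrite (eqmxP (flat_fcl _)) flat1 in_closed_le.
Qed.

Lemma meet_prop (X Y : {set 'I_m}) : cl X -> cl Y -> X != Y ->
  \rank (F X) = \rank (F Y) ->
  [/\ (\rank (F X) + \rank (F Y) <= n + \rank (F (fcl (X :|: Y))) )%N,
      (\rank (F (fcl (X :|: Y))) < \rank (F X))%N,
      (F (fcl (X :|: Y)) <= F X)%MS & (F (fcl (X :|: Y)) <= F Y)%MS].
Proof.
move=> cX cY XY eXY.
rewrite (eqmx_rank (flat_fcl _)) (eqmx_rank (flat_union _ _)).
split.
- have := mxrank_sum_cap (F X) (F Y); have := rank_leq_col (F X + F Y)%MS.
  move: (\rank (F X + F Y)%MS) (\rank (F X :&: F Y)%MS) => x y; lia.
- have := mxrank_leqif_eq (capmxSl (F X) (F Y)) => -[le1 eq1].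
  rewrite ltn_neqAle le1 andbT eq1.
  apply/negP => /eqmxP e; case/negP: XY; apply/eqP.
  have le2 : (F X <= F Y)%MS.
    by apply: submx_trans (capmxSr (F X) (F Y)); rewrite e.
  exact: closed_rank_eq.
- by rewrite (eqmxP (flat_fcl _)) (eqmxP (flat_union _ _)) capmxSl.
- by rewrite (eqmxP (flat_fcl _)) (eqmxP (flat_union _ _)) capmxSr.
Qed.

Lemma meet_unique (X Y A : {set 'I_m}) : cl A ->
  (F A <= F X)%MS -> (F A <= F Y)%MS ->
  \rank (F A) = \rank (F (fcl (X :|: Y))) -> A = fcl (X :|: Y).
Proof.
move=> cA le1 le2 e; apply: closed_rank_eq => //; first exact: fcl_closed.
by rewrite (eqmxP (flat_fcl _)) (eqmxP (flat_union _ _)) sub_capmx le1.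
Qed.


Local Notation le := (flat_le a).

Lemma mobS (k : nat) (x y : {set 'I_m}) : mobius_aux le k.+1 x y =
  if y == x then 1 else if le x y then
    - \sum_(z | le x z && le z y && (z != y)) mobius_aux le k x z else 0.
Proof. by []. Qed.

Lemma lower_eq (X z : {set 'I_m}) : cl X ->
  (le setT z && le z X && (z != X)) = [&& cl z, (F z <= F X)%MS & z != X].
Proof.
move=> cX; rewrite /flat_le closedT flat_bot_le cX /=.
by case: (cl z).
Qed.

Lemma le_botX (X : {set 'I_m}) : cl X -> le setT X.
Proof. by move=> cX; rewrite /flat_le closedT cX flat_bot_le. Qed.

Lemma lvl_neq j k (X Y : {set 'I_m}) : lvl j X -> lvl k Y -> j != k -> X != Y.
Proof.
move=> /andP [_ /eqP e1] /andP [_ /eqP e2] jk; apply: contra jk => /eqP XY.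
by move: e1; rewrite XY e2 => /addnI ->.
Qed.

Lemma lvl_cl j X : lvl j X -> cl X.
Proof. by case/andP. Qed.

Lemma lvl_rank j X : lvl j X -> \rank (F X) = (d0 + j)%N.
Proof. by case/andP => _ /eqP. Qed.

Lemma lvl0T : lvl 0 setT.
Proof. by rewrite lvl0E. Qed.

Definition aX (X : {set 'I_m}) : nat := \sum_(A | lvl 1 A && (F A <= F X)%MS) 1.

Lemma mu1 k X : lvl 1 X -> mobius_aux le k.+2 setT X = -1.
Proof.
move=> X1; rewrite mobS (negbTE (lvl_neq X1 lvl0T _)) // le_botX ?(lvl_cl X1) //.
rewrite (eq_bigl (fun z => z == setT)); first by rewrite big_pred1_eq mobS eqxx.
move=> z; rewrite lower_eq ?(lvl_cl X1) //.
apply/idP/eqP => [/and3P [cz le1 ne] | ->].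
  apply/eqP; rewrite -lvl0E /lvl cz addn0 eqn_leq rank_ge andbT.
  have := closed_rank_lt cz (lvl_cl X1) le1 ne; rewrite (lvl_rank X1) addn1 ltnS.
  done.
by rewrite closedT flat_bot_le eq_sym (lvl_neq X1 lvl0T).
Qed.

Lemma mu2 k X : lvl 2 X -> mobius_aux le k.+3 setT X = (aX X)%:Z - 1.
Proof.
move=> X2; have cX := lvl_cl X2.
rewrite mobS (negbTE (lvl_neq X2 lvl0T _)) // le_botX //.
rewrite (bigD1 setT); last by rewrite lower_eq // closedT flat_bot_le eq_sym (lvl_neq X2 lvl0T).
rewrite mobS eqxx.
rewrite (eq_bigl (fun z => lvl 1 z && (F z <= F X)%MS)); last first.
  move=> z; rewrite lower_eq //.
  apply/idP/idP => [/andP [/and3P [cz le1 ne] nT] | /andP [z1 le1]].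
    rewrite le1 andbT /lvl cz.
    have := closed_rank_lt cz cX le1 ne; rewrite (lvl_rank X2).
    have := rank_ge z.
    have : \rank (F z) != d0.
      by apply: contra nT => e; rewrite -lvl0E /lvl cz addn0.
    move: (\rank (F z)) => x; lia.
  by rewrite (lvl_cl z1) le1 (lvl_neq z1 X2) // (lvl_neq z1 lvl0T).
rewrite (eq_bigr (fun _ => -1)); last by move=> z /andP [z1 _]; rewrite mu1.
rewrite sumrN /aX -natz natr_sum /=.
set s := (\sum_(_ | _) _); rewrite opprD opprK addrC.
done.
Qed.


Lemma rank_neq_bot z : cl z -> z != setT -> \rank (F z) != d0.
Proof. by move=> cz; apply: contra => e; rewrite -lvl0E /lvl cz addn0. Qed.

Lemma mu3 k X : lvl 3 X -> mobius_aux le k.+4 setT X =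
  - (1 - (aX X)%:Z + \sum_(Y | lvl 2 Y && (F Y <= F X)%MS) ((aX Y)%:Z - 1)).
Proof.
move=> X3; have cX := lvl_cl X3.
rewrite mobS (negbTE (lvl_neq X3 lvl0T _)) // le_botX //.
rewrite (bigD1 setT); last by rewrite lower_eq // closedT flat_bot_le eq_sym (lvl_neq X3 lvl0T).
rewrite mobS eqxx.
rewrite (bigID (fun z => \rank (F z) == d0 + 1)%N).
rewrite (eq_bigl (fun z => lvl 1 z && (F z <= F X)%MS)); last first.
  move=> z /=; rewrite lower_eq //.
  apply/idP/idP => [/andP [/andP [/and3P [cz le1 ne] nT] r1] | /andP [z1 le1]].
    by rewrite le1 andbT /lvl cz.
  by rewrite (lvl_cl z1) le1 (lvl_neq z1 X3) // (lvl_neq z1 lvl0T) // (lvl_rank z1) eqxx.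
have -> : \sum_(i | le setT i && le i X && (i != X) && (i != setT) && (\rank (F i) != (d0 + 1)%N)) mobius_aux le k.+3 setT i
   = \sum_(Y | lvl 2 Y && (F Y <= F X)%MS) ((aX Y)%:Z - 1).
  rewrite (eq_bigr (fun Y => (aX Y)%:Z - 1)); last first.
    move=> z /andP [/andP [zz nT] r1].
    rewrite lower_eq // in zz; case/and3P: zz => cz le1 ne.
    rewrite mu2 // /lvl cz.
    have := closed_rank_lt cz cX le1 ne; rewrite (lvl_rank X3).
    have := rank_ge z; have := rank_neq_bot cz nT.
    move: (\rank (F z)) r1 => x; lia.
  apply: eq_bigl => z /=; rewrite lower_eq //.
  apply/idP/idP => [/andP [/andP [/and3P [cz le1 ne] nT] r1] | /andP [z2 le1]].
    rewrite le1 andbT /lvl cz.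
    have := closed_rank_lt cz cX le1 ne; rewrite (lvl_rank X3).
    have := rank_ge z; have := rank_neq_bot cz nT.
    move: (\rank (F z)) r1 => x; lia.
  rewrite (lvl_cl z2) le1 (lvl_neq z2 X3) // (lvl_neq z2 lvl0T) // (lvl_rank z2).
  by rewrite eqn_add2l.
rewrite (eq_bigr (fun _ => -1)); last by move=> z /andP [z1 _]; rewrite mu1.
rewrite sumrN /aX -natz natr_sum /=.
by rewrite addrA.
Qed.


Section Rank3.
Hypothesis hr : n = (d0 + 3)%N.

Lemma lvl3_0 : lvl 3 set0.
Proof. by rewrite /lvl closed0 flat0 mxrank1 -hr eqxx. Qed.

Lemma lvl2_fcl1 i : lvl 2 (fcl [set i]).
Proof. rewrite /lvl fcl1_closed fcl1_rank; apply/eqP; have := hr; lia. Qed.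

Lemma meet3 X Y : lvl 2 X -> lvl 2 Y -> X != Y ->
  [/\ lvl 1 (fcl (X :|: Y)), (F (fcl (X :|: Y)) <= F X)%MS & (F (fcl (X :|: Y)) <= F Y)%MS].
Proof.
move=> X2 Y2 XY.
have [h1 h2 h3 h4] := meet_prop (lvl_cl X2) (lvl_cl Y2) XY (etrans (lvl_rank X2) (esym (lvl_rank Y2))).
split=> //; rewrite /lvl fcl_closed /=.
move: h1 h2; rewrite (lvl_rank X2) (lvl_rank Y2); have := hr.
lia.
Qed.

Lemma uniq3 X Y A : lvl 2 X -> lvl 2 Y -> X != Y -> lvl 1 A ->
  (F A <= F X)%MS -> (F A <= F Y)%MS -> A = fcl (X :|: Y).
Proof.
move=> X2 Y2 XY A1 le1 le2; have [M1 _ _] := meet3 X2 Y2 XY.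
apply: meet_unique => //; first exact: lvl_cl A1.
by rewrite (lvl_rank A1) (lvl_rank M1).
Qed.

Lemma up3 A : lvl 1 A -> exists X, lvl 2 X && (F A <= F X)%MS.
Proof.
move=> A1; have [i le1] := step_up (lvl_cl A1) (lvl_neq A1 lvl3_0 isT).
exists (Defs.fclosure a [set i]); rewrite le1 andbT; exact: lvl2_fcl1.
Qed.

Lemma down3 X : lvl 2 X -> exists A, lvl 1 A && (F A <= F X)%MS.
Proof.
move=> X2; have XT : X != setT by apply: (lvl_neq X2 lvl0T).
have [A [cA le1 rA]] := step_down (lvl_cl X2) XT.
exists A; rewrite le1 andbT /lvl cA rA (lvl_rank X2) /=; apply/eqP; lia.
Qed.

Lemma m_gt0 : (0 < m)%N.
Proof. have := rank_bot_ge; have := hr; lia. Qed.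

Definition sA (A : {set 'I_m}) : nat := \sum_(X | lvl 2 X && (F A <= F X)%MS) 1.

Lemma aX_ge1 X : lvl 2 X -> (1 <= aX X)%N.
Proof.
case/down3 => A AX; rewrite /aX (bigD1 A) //=; lia.
Qed.

Lemma sA_ge1 A : lvl 1 A -> (1 <= sA A)%N.
Proof.
case/up3 => X AX; rewrite /sA (bigD1 X) //=; lia.
Qed.


Definition ell := \sum_(A | lvl 1 A) 1%N.
Definition hh := \sum_(X | lvl 2 X) 1%N.
Definition Ssum := \sum_(X | lvl 2 X) (aX X - 1)%N.

Lemma double_count : \sum_(X | lvl 2 X) aX X = \sum_(A | lvl 1 A) sA A.
Proof.
rewrite /aX /sA (exchange_big_dep (lvl 1)) /=; last by move=> X A _ /andP [].
by apply: eq_bigr => A A1; apply: eq_bigl => X; rewrite A1.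
Qed.

Lemma S_plus_h : (Ssum + hh = \sum_(X | lvl 2 X) aX X)%N.
Proof.
rewrite /Ssum /hh -big_split; apply: eq_bigr => X X2 /=.
by rewrite subnK // aX_ge1.
Qed.

Lemma sA_le_t H0 A : lvl 2 H0 -> lvl 1 A -> ~~ (F A <= F H0)%MS -> (sA A <= aX H0)%N.
Proof.
move=> H02 A1 nle.
rewrite /sA /aX !sum1dep_card.
rewrite -(@card_in_imset _ _ (fun X => fcl (X :|: H0))).
  apply: subset_leq_card; apply/subsetP => y /imsetP [X]; rewrite inE => /andP [X2 le1] ->.
  have XH : X != H0 by apply: contra nle => /eqP <-.
  by have [M1 M2 M3] := meet3 X2 H02 XH; rewrite inE M1 M3.
move=> X Y; rewrite !inE => /andP [X2 leX] /andP [Y2 leY] e.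
have XH : X != H0 by apply: contra nle => /eqP <-.
have YH : Y != H0 by apply: contra nle => /eqP <-.
apply/eqP; apply/negP => /negP XY.
have [M1 M2 M3] := meet3 X2 H02 XH.
have MY : (F (fcl (X :|: H0)) <= F Y)%MS by rewrite e; have [] := meet3 Y2 H02 YH.
have e1 := uniq3 X2 Y2 XY A1 leX leY.
have e2 := uniq3 X2 Y2 XY M1 M2 MY.
by case/negP: nle; rewrite e1 -e2.
Qed.

Lemma comb3 : (ell <= Ssum + 1)%N /\ (4 * (Ssum + 1) <= (ell + 1) ^ 2)%N.
Proof.
pose i := Ordinal m_gt0.
pose H0 := fcl [set i]; have H02 : lvl 2 H0 := lvl2_fcl1 i.
pose t := aX H0.
pose u := \sum_(A | lvl 1 A && ~~ (F A <= F H0)%MS) 1%N.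
pose P2 := \sum_(A | lvl 1 A && ~~ (F A <= F H0)%MS) sA A.
have hh1 : hh = (\sum_(X | lvl 2 X && (X != H0)) 1).+1.
  by rewrite /hh (bigD1 H0).
have part1 : \sum_(A | lvl 1 A && (F A <= F H0)%MS) sA A = (t + (hh - 1))%N.
  transitivity (\sum_(A | lvl 1 A && (F A <= F H0)%MS)
       (1 + \sum_(X | lvl 2 X && (X != H0) && (F A <= F X)%MS) 1))%N.
    apply: eq_bigr => A /andP [A1 le0]; rewrite /sA (bigD1 H0) /=; last by rewrite H02.
    by congr (_ + _)%N; apply: eq_bigl => X; rewrite andbAC.
  rewrite big_split /=; congr (_ + _)%N.
  rewrite hh1 subn1 /=.
  rewrite (exchange_big_dep (fun X => lvl 2 X && (X != H0))) /=; last by move=> A X _ /andP [].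
  apply: eq_bigr => X /andP [X2 XH].
  rewrite (eq_bigl (fun A => A == fcl (X :|: H0))) ?big_pred1_eq //.
  move=> A; apply/idP/eqP => [/andP [/andP [A1 le0] /andP [_ leX]] | ->].
    exact: uniq3 X2 H02 XH A1 leX le0.
  by have [M1 M2 M3] := meet3 X2 H02 XH; rewrite M1 M2 M3 X2 XH.
have lo : (u <= P2)%N by apply: leq_sum => A /andP [A1 _]; exact: sA_ge1.
have hi : (P2 <= u * t)%N.
  rewrite /u big_distrl /=; apply: leq_sum => A /andP [A1 nle].
  by rewrite mul1n; exact: sA_le_t.
have ellE : ell = (t + u)%N by rewrite /ell (bigID (fun A => (F A <= F H0)%MS)).
have tot : (Ssum + hh = t + (hh - 1) + P2)%N.
  by rewrite S_plus_h double_count (bigID (fun A => (F A <= F H0)%MS)) /= part1.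
rewrite ellE.
have : (1 <= hh)%N by rewrite hh1.
move: tot lo hi; clear ellE hh1 part1; clearbody t u P2.
move: Ssum hh => S h.
have key : (4 * (t * (u + 1)) <= (t + u + 1) ^ 2)%N.
  case: (leqP t (u + 1)) => htu.
    have [d hd] : exists d, (u + 1 = t + d)%N by exists (u + 1 - t)%N; lia.
    rewrite (_ : (t + u + 1 = 2 * t + d)%N); last by lia.
    rewrite hd; nia.
  have [d ->] : exists d, (t = u + 1 + d)%N by exists (t - (u + 1))%N; lia.
  nia.
move=> tot lo hi h1; split; first lia.
have e : (S + 1 = t + P2)%N by lia.
rewrite e; nia.
Qed.

End Rank3.

Lemma fuel_gt : (n - d0 < #|{set 'I_m}|)%N.
Proof.
have h1 := rank_bot_ge.
have h2 : (m < 2 ^ m)%N by apply: ltn_expl.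
have h3 : (2 ^ m <= #|{set 'I_m}|)%N.
  by rewrite -{1}(card_ord m) -cardsT -card_powerset max_card.
lia.
Qed.

Lemma fuelE j : (j <= n - d0)%N -> exists k, #|{set 'I_m}| = (k + j.+1)%N.
Proof. move=> hj; have := fuel_gt; exists (#|{set 'I_m}| - j.+1)%N; lia. Qed.

Local Notation mob S := (mobius (flat_le a) (flat_bot m) S).

Lemma mob_fuel (S : {set 'I_m}) j : (j <= n - d0)%N ->
  exists k, mob S = mobius_aux le (k + j.+1) setT S.
Proof.
move=> h; rewrite /mobius /flat_bot.
set K := (X in mobius_aux _ X _ _).
have hK : (n - d0 < K)%N by exact: fuel_gt.
by exists (K - j.+1)%N; congr mobius_aux; lia.
Qed.

Lemma mob0 : mob setT = 1.
Proof.
have [k ->] := mob_fuel setT (leq0n _).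
by rewrite addn1 mobS eqxx.
Qed.

Lemma mob1 S : (1 <= n - d0)%N -> lvl 1 S -> mob S = -1.
Proof.
move=> h S1; have [k ->] := mob_fuel S h.
by rewrite addn2 mu1.
Qed.

Lemma mob2 S : (2 <= n - d0)%N -> lvl 2 S -> mob S = (aX S)%:Z - 1.
Proof.
move=> h S2; have [k ->] := mob_fuel S h.
by rewrite addn3 mu2.
Qed.

Lemma mob3 S : (3 <= n - d0)%N -> lvl 3 S -> mob S =
  - (1 - (aX S)%:Z + \sum_(Y | lvl 2 Y && (F Y <= F S)%MS) ((aX Y)%:Z - 1)).
Proof.
move=> h S3; have [k ->] := mob_fuel S h.
by rewrite addn4 mu3.
Qed.

Lemma lvl_top S : lvl (n - d0) S = (S == set0).
Proof.
have := rank_le setT => hd.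
apply/idP/eqP => [/andP [cS /eqP e] | ->].
  by apply: top_eq => //; rewrite e; lia.
by rewrite /lvl closed0 flat0 mxrank1; apply/eqP; lia.
Qed.

Lemma poly_levels : arr_poly a = \sum_(j < (n - d0).+1)
   (\sum_(S | lvl j S) `|mob S|%N)%:R *: ('X - 1) ^+ (n - d0 - j).
Proof.
rewrite /arr_poly (partition_big (fun S => inord (\rank (F S) - d0) : 'I_(n - d0).+1) xpredT) //.
apply: eq_bigr => j _; rewrite natr_sum scaler_suml.
apply: eq_big => S.
  apply/idP/idP => [/andP [cS /eqP <-] | /andP [cS /eqP e]].
    rewrite /lvl cS inordK; last by have := rank_le S; have := rank_ge S; lia.
    by apply/eqP; have := rank_ge S; lia.
  rewrite cS /=; apply/eqP/val_inj => /=; rewrite e inordK; first lia.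
  have := ltn_ord j; lia.
move=> /andP [cS /eqP e]; rewrite /codim; congr (_ *: _ ^+ _).
have := rank_ge S; have := rank_le S; rewrite -e inordK; first lia.
have := rank_le S; have := rank_ge S; lia.
Qed.

Lemma s0E : \sum_(S | lvl 0 S) `|mob S|%N = 1%N.
Proof. by rewrite (eq_bigl _ _ lvl0E) big_pred1_eq mob0. Qed.

Lemma s1E : (1 <= n - d0)%N -> \sum_(S | lvl 1 S) `|mob S|%N = \sum_(S | lvl 1 S) 1%N.
Proof. by move=> h; apply: eq_bigr => S S1; rewrite mob1. Qed.

Lemma lvl_topE k : (n - d0 = k)%N -> lvl k =1 (fun S => S == set0).
Proof. by move=> e S; have := lvl_top S; rewrite e. Qed.

Lemma absz_sub1 k : (1 <= k)%N -> `|k%:Z - 1|%N = (k - 1)%N.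
Proof. by move=> h; rewrite -[k](subnK h) PoszD addrK addnK. Qed.

Lemma quad_roots (b c : R) : 4 * c <= b ^+ 2 ->
  exists y1 y2, y1 + y2 = b /\ y1 * y2 = c.
Proof.
move=> h; pose s := Num.sqrt (b ^+ 2 - 4 * c).
have hs : s ^+ 2 = b ^+ 2 - 4 * c by rewrite sqr_sqrtr // subr_ge0.
exists ((b + s) / 2), ((b - s) / 2); split; first by field.
rewrite (_ : (b + s) / 2 * ((b - s) / 2) = (b ^+ 2 - s ^+ 2) / 4); last by field.
by rewrite hs; field.
Qed.

Lemma rr_cubic (y1 y2 : R) :
  real_rooted ((('X - 1) ^+ 3 : {poly R}) + (1 - y1 - y2) *: ('X - 1) ^+ 2
     + (y1 * y2 - y1 - y2) *: ('X - 1) ^+ 1 + (y1 * y2) *: ('X - 1) ^+ 0).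
Proof.
exists 1, [:: 0; 1 + y1; 1 + y2].
rewrite !big_cons big_nil scale1r -!mul_polyC.
rewrite !rmorphB !rmorphD !rmorphM /= !polyC1 polyC0.
ring.
Qed.

Lemma main3 : n = (d0 + 3)%N -> real_rooted (arr_poly a).
Proof.
move=> hr; have e : (n - d0 = 3)%N by lia.
rewrite poly_levels e !big_ord_recl big_ord0 /bump /=.
rewrite s0E s1E ?e // -/(ell).
have L3 := lvl_topE e.
rewrite (eq_bigl _ _ L3) big_pred1_eq.
rewrite (eq_bigr (fun S => aX S - 1)%N); last first.
  by move=> S S2; rewrite mob2 ?e // absz_sub1 // aX_ge1.
rewrite -/(Ssum) mob3 ?e ?L3 //.
have -> : aX set0 = ell.
  by rewrite /aX /ell; apply: eq_bigl => A; rewrite flat0 submx1 andbT.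
have -> : \sum_(Y | lvl 2 Y && (F Y <= F set0)%MS) ((aX Y)%:Z - 1) = Ssum%:Z.
  rewrite /Ssum -natz natr_sum; apply: eq_big => [Y|Y /andP [Y2 _]].
    by rewrite flat0 submx1 andbT.
  by rewrite natz -subzn ?aX_ge1.
have [c1 c2] := comb3 hr.
have -> : `|- (1 - ell%:Z + Ssum%:Z)|%N = (Ssum + 1 - ell)%N by lia.
rewrite addr0 !addrA scale1r.
have hq : 4 * ((Ssum + 1 - ell)%N%:R : R) <= (1 - ell%:R) ^+ 2.
  rewrite natrB // natrD.
  have : ((4 * (Ssum + 1))%N%:R <= ((ell + 1) ^ 2)%N%:R :> R) by rewrite ler_nat.
  rewrite natrM natrX !natrD; nra.
have [y1 [y2 [hs hp]]] := quad_roots hq.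
have -> : (ell%:R : R) = 1 - y1 - y2 by lra.
have -> : (Ssum%:R : R) = y1 * y2 - y1 - y2.
  rewrite hp natrB // natrD; lra.
rewrite -hp; exact: rr_cubic.
Qed.

Lemma rr_quad (y : R) :
  real_rooted ((('X - 1) ^+ 2 : {poly R}) + (1 - y) *: ('X - 1) ^+ 1 + (- y) *: ('X - 1) ^+ 0).
Proof.
exists 1, [:: 0; 1 + y].
rewrite !big_cons big_nil scale1r -!mul_polyC.
rewrite !rmorphB !rmorphD !rmorphN /= !polyC1 polyC0.
ring.
Qed.

Lemma main2 : n = (d0 + 2)%N -> real_rooted (arr_poly a).
Proof.
move=> hr; have e : (n - d0 = 2)%N by lia.
rewrite poly_levels e !big_ord_recl big_ord0.
rewrite s0E s1E ?e // -/(ell).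
have L2 := lvl_topE e.
rewrite (eq_bigl _ _ L2) big_pred1_eq mob2 ?e ?L2 //.
have -> : aX set0 = ell.
  by rewrite /aX /ell; apply: eq_bigl => A; rewrite flat0 submx1 andbT.
have ell1 : (1 <= ell)%N.
  have hm : (0 < m)%N by have := rank_bot_ge; lia.
  have A1 : lvl 1 (fcl [set Ordinal hm]).
    by rewrite /lvl fcl1_closed fcl1_rank; apply/eqP; lia.
  by rewrite /ell (bigD1 _ A1).
rewrite absz_sub1 // addr0 !addrA scale1r.
have -> : (ell%:R : R) = 1 - (1 - ell%:R) by ring.
have -> : ((ell - 1)%N%:R : R) = - (1 - ell%:R) by rewrite natrB // ; ring.
exact: rr_quad.
Qed.

Lemma main1 : n = (d0 + 1)%N -> real_rooted (arr_poly a).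
Proof.
move=> hr; have e : (n - d0 = 1)%N by lia.
rewrite poly_levels e !big_ord_recl big_ord0.
rewrite s0E.
have L1 := lvl_topE e.
rewrite (eq_bigl _ _ L1) big_pred1_eq mob1 ?e ?L1 //.
exists 1, [:: 0]; rewrite !big_cons big_nil scale1r addr0 !scale1r mulr1 subr0.
rewrite expr1 expr0 subrK //.
Qed.

Lemma main0 : n = d0 -> real_rooted (arr_poly a).
Proof.
move=> hr; have e : (n - d0 = 0)%N by lia.
rewrite poly_levels e !big_ord_recl big_ord0 s0E.
by exists 1, [::]; rewrite big_nil sub0n expr0 addr0.
Qed.

Lemma main_all : (n - d0 <= 3)%N -> real_rooted (arr_poly a).
Proof.
move=> h; have hn := rank_le setT.
case E : (n - d0)%N h => [|[|[|[|k]]]] // _.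
- by apply: main0; lia.
- by apply: main1; lia.
- by apply: main2; lia.
- by apply: main3; lia.
Qed.

End Basic.

Unset Implicit Arguments. Set Strict Implicit. Set Printing Implicit Defensive.

Theorem theorem9p1 (R : realType) (n m : nat) (a : 'I_m -> 'cV[R]_n) :
  (forall i, a i != 0) ->
  (arr_rank a <= 3)%N ->
  real_rooted (arr_poly a).
Proof.
move=> ha hr; apply: (main_all ha).
by move: hr; rewrite /arr_rank /codim /flat_bot.
Qed.
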